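(* Let $p \ge 2$, $k = 2^{p-1}$ and let $M$ be the model matrix of the main effect model of the $2^{p-1}$ fractional factorial design of resolution $p$ (defined in the context). For every degree $2$ fiber $F$ with more than one element, choose a set $\mathcal{B}_F$ of $|F|-1$ moves, each of the form $\mathbf{x}-\mathbf{y}$ with $\mathbf{x},\mathbf{y}\in F$, such that the graph on $F$ with edges $\{\mathbf{x},\mathbf{y}\}$ for $\mathbf{x}-\mathbf{y}\in\mathcal{B}_F$ is connected. Then $\mathcal{B} = \bigcup_F \mathcal{B}_F$ is a minimal Markov basis for $M'$; that is, a minimal Markov basis for $M'$ is constructed as the set of moves connecting all degree $2$ fibers with more than one element.
   Context: Cells are indexed by $\mathbf{i} = (i_1,\ldots,i_{p-1}) \in \{0,1\}^{p-1}$; vectors in $\mathbb{Z}^k$ are indexed by cells. The design: in run $\mathbf{i}$, factor $m$ ($1\le m\le p-1$) is at level $(-1)^{i_m}$ and factor $p$ at level $(-1)^{i_1+\cdots+i_{p-1}}$ (defining relation: product of all $p$ factors is the identity). $M$ is the $k\times(p+1)$ matrix whose row for run $\mathbf{i}$ is $\big(1,(-1)^{i_1},\ldots,(-1)^{i_{p-1}},(-1)^{i_1+\cdots+i_{p-1}}\big)$. A move is $\mathbf{z}\in\mathbb{Z}^k$ with $M'\mathbf{z}=\mathbf{0}$. For $\mathbf{b}\in\mathbb{N}^k$ the fiber is $\mathcal{F}(M'\mathbf{b})=\{\mathbf{y}\in\mathbb{N}^k : M'\mathbf{y}=M'\mathbf{b}\}$; it is a degree $2$ fiber if $\sum_{\mathbf{i}}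 b(\mathbf{i}) = 2$. For a set $\mathcal{B}$ of moves, $G(\mathbf{b},\mathcal{B})$ is the graph on $\mathcal{F}(M'\mathbf{b})$ joining $\mathbf{x},\mathbf{y}$ when $\pm(\mathbf{y}-\mathbf{x})\in\mathcal{B}$. A finite set $\mathcal{B}$ of moves is a Markov basis for $M'$ if $G(\mathbf{b},\mathcal{B})$ is connected for every $\mathbf{b}\in\mathbb{N}^k$, and minimal if no proper subset is a Markov basis. *)

(* Defs.v *)
From HB Require Import structures.
From mathcomp Require Import all_boot all_order all_algebra.
From mathcomp Require Import finmap.
From Stdlib Require Import Relations.
Set Implicit Arguments. Unset Strict Implicit. Unset Printing Implicit Defensive.
Import GRing.Theory Num.Theory.
Local Open Scope ring_scope.
Local Open Scope fset_scope.

(* Cells i = (i_1,...,i_{p-1}) in {0,1}^{p-1}  (true = 1). k = 2^(p-1) = #|cell p|. *)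
Definition cell (p : nat) := {ffun 'I_p.-1 -> bool}.

Definition zvec (p : nat) := {ffun cell p -> int}.
Definition nvec (p : nat) := {ffun cell p -> nat}.

Definition toZ (p : nat) (y : nvec p) : zvec p := [ffun i => (y i)%:Z].

(* Entry (i, j) of the k x (p+1) model matrix M, j = 0..p:
   column 0 : 1;
   column j, 1 <= j <= p-1 : (-1)^(i_j)  (the unique m < p-1 with m+1 = j);
   column p : (-1)^(i_1 + ... + i_{p-1}). *)
Definition Mentry (p : nat) (i : cell p) (j : 'I_p.+1) : int :=
  if (j : nat) == 0%N then 1
  else if (j : nat) == p then (-1) ^+ (\sum_(m < p.-1) nat_of_bool (i m))
  else (-1) ^+ (\sum_(m < p.-1 | (m.+1 == j)%N) nat_of_bool (i m)).

Definition Mt (p : nat) (z : zvec p) (j : 'I_p.+1) : int :=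
  \sum_(i : cell p) Mentry i j * z i.

Definition is_move (p : nat) (z : zvec p) : Prop := forall j, Mt z j = 0.

Definition inFiber (p : nat) (b y : nvec p) : Prop :=
  forall j, Mt (toZ y) j = Mt (toZ b) j.

Definition deg2 (p : nat) (b : nvec p) : Prop := (\sum_(i : cell p) b i)%N = 2%N.

Definition gedge (p : nat) (B : {fset zvec p}) (b : nvec p) (x y : nvec p) : Prop :=
  [/\ inFiber b x, inFiber b y &
      ((toZ y - toZ x) \in B \/ (toZ x - toZ y) \in B)].

Definition gconnected (p : nat) (B : {fset zvec p}) (b : nvec p) : Prop :=
  forall x y, inFiber b x -> inFiber b y -> clos_refl_trans _ (gedge B b) x y.

Definition markov_basis (p : nat) (B : {fset zvec p}) : Prop :=
  (forall z, z \in B -> is_move z) /\ (forall b : nvec p, gconnected B b).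

Definition minimal_markov_basis (p : nat) (B : {fset zvec p}) : Prop :=
  markov_basis B /\ (forall B' : {fset zvec p}, B' `<` B -> ~ markov_basis B').

Definition fiber_set (p : nat) (b : nvec p) (S : {fset nvec p}) : Prop :=
  forall y, y \in S <-> inFiber b y.

Definition nontrivial_fiber (p : nat) (b : nvec p) : Prop :=
  exists y, inFiber b y /\ y <> b.

(* Main.v *)
Require Import Defs.
From HB Require Import structures.
From mathcomp Require Import all_boot all_order all_algebra.
From mathcomp Require Import finmap.
From mathcomp Require Import zify.
From Stdlib Require Import Relations Classical.
Set Implicit Arguments. Unset Strict Implicit. Unset Printing Implicit Defensive.
Import GRing.Theory Num.Theory.

Section Graph.
Local Open Scope fset_scope.
Variable T : choiceType.

Definition adj (es : seq (T * T)) (x y : T) : Prop :=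
  exists2 e, e \in es & ((e.1 == x) && (e.2 == y)) || ((e.1 == y) && (e.2 == x)).

Lemma adj_nil x y : ~ adj [::] x y.
Proof. by case. Qed.

Lemma adj_cons e es x y : adj (e :: es) x y ->
  adj es x y \/ ((x = e.1 /\ y = e.2) \/ (x = e.2 /\ y = e.1)).
Proof.
case=> f; rewrite inE => /orP[/eqP ->|fe] h; last by left; exists f.
right; case/orP: h => /andP[/eqP -> /eqP ->]; by [left | right].
Qed.

Lemma adj_sub es es' x y : {subset es <= es'} -> adj es x y -> adj es' x y.
Proof. by move=> s [e he h]; exists e => //; apply: s. Qed.

Lemma reach_card (es : seq (T * T)) (R X : {fset T}) :
  (forall x, x \in X -> exists2 r, r \in R & clos_refl_trans T (adj es) r x) ->
  (#|` X| <= #|` R| + size es)%N.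
Proof.
elim: es R X => [|e es IH] R X h.
  rewrite addn0; apply: fsubset_leq_card; apply/fsubsetP => x hx.
  have [r hr c] := h x hx; move/clos_rt_rtn1_iff: c; case=> [//|y z a _].
  by case: a.
have addb1 : forall (R' : {fset T}) b, (#|` R' `|` [fset b]| <= #|` R'| + 1)%N.
  by move=> R' b; rewrite cardfsU cardfs1 leq_subLR leq_addl.
have gen : forall b a, (exists2 r, r \in R & clos_refl_trans T (adj es) r a) ->
    (e.1 = a /\ e.2 = b) \/ (e.1 = b /\ e.2 = a) ->
    (#|` X| <= #|` R| + size (e :: es))%N.
  move=> b a [ra hra ca] hab.
  have : (#|` X| <= #|` R `|` [fset b]| + size es)%N.
    apply: IH => x hx; have [r hr c] := h x hx.
    move/clos_rt_rtn1_iff: c; elim=> [|y z a' _ [r' hr' c']].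
      by exists r; [rewrite in_fsetU hr | apply: rt_refl].
    case/adj_cons: a' => [a'|[[ey ez]|[ey ez]]].
    - exists r' => //; apply: rt_trans c' (rt_step _ _ _ _ a').
    - case: hab => [[e1 e2]|[e1 e2]].
        by exists b; [rewrite in_fsetU in_fset1 eqxx orbT | rewrite ez e2; apply: rt_refl].
      by exists ra; [rewrite in_fsetU hra | rewrite ez e2].
    - case: hab => [[e1 e2]|[e1 e2]].
        by exists ra; [rewrite in_fsetU hra | rewrite ez e1].
      by exists b; [rewrite in_fsetU in_fset1 eqxx orbT | rewrite ez e1; apply: rt_refl].
  have := addb1 R b; rewrite /=; lia.
case: (classic (exists2 r, r \in R & clos_refl_trans T (adj es) r e.1)) => [h1|n1].
  by apply: (gen e.2 e.1) => //; left.
case: (classic (exists2 r, r \in R & clos_refl_trans T (adj es) r e.2)) => [h2|n2].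
  by apply: (gen e.1 e.2) => //; right.
have : (#|` X| <= #|` R| + size es)%N.
  apply: IH => x hx; have [r hr c] := h x hx.
  move/clos_rt_rtn1_iff: c; elim=> [|y z a' c1 [r' hr' c']].
    by exists r => //; apply: rt_refl.
  case/adj_cons: a' => [a'|[[ey ez]|[ey ez]]].
  - exists r' => //; apply: rt_trans c' (rt_step _ _ _ _ a').
  - by exfalso; apply: n1; exists r' => //; rewrite -ey.
  - by exfalso; apply: n2; exists r' => //; rewrite -ey.
rewrite /=; lia.
Qed.

End Graph.

Section Core.
Variable n : nat.
Local Notation C := (cell n.+1).
Local Notation V := (nvec n.+1).

Definition cg (i : C) (k : nat) : bool :=
  if @insub nat (fun k => k < n) _ k is Some m then i m else false.
Definition par (i : C) : bool := odd (\sum_(0 <= k < n) cg i k).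
Definition bit (i : C) (k : nat) : bool := if k < n then cg i k else par i.

Lemma cg_ord (i : C) (m : 'I_n) : cg i m = i m.
Proof. by rewrite /cg valK. Qed.

Lemma cg_ge (i : C) k : n <= k -> cg i k = false.
Proof. by move=> h; rewrite /cg insubF // ltnNge h. Qed.

Lemma bit_ord (i : C) (m : 'I_n) : bit i m = i m.
Proof. by rewrite /bit ltn_ord cg_ord. Qed.

Lemma bit_n (i : C) : bit i n = par i.
Proof. by rewrite /bit ltnn. Qed.

Lemma sum_ord_cg (i : C) : \sum_(m < n) i m = \sum_(0 <= k < n) cg i k.
Proof. by rewrite big_mkord; apply: eq_bigr => m _; rewrite cg_ord. Qed.

Lemma sum_bit_even (i : C) : ~~ odd (\sum_(0 <= k < n.+1) bit i k).
Proof.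
rewrite big_nat_recr //= bit_n.
have -> : \sum_(0 <= k < n) bit i k = \sum_(0 <= k < n) cg i k.
  by apply: eq_big_nat => k /andP[_ h]; rewrite /bit h.
by rewrite oddD /par; case: (odd _).
Qed.

Lemma cell_eq (i j : C) : (forall k, k < n -> bit i k = bit j k) -> i = j.
Proof. by move=> h; apply/ffunP => m; rewrite -!bit_ord h. Qed.

Definition flip2 (k l : nat) (i : C) : C :=
  [ffun m : 'I_n => i m (+) ((val m == k) || (val m == l))].

Lemma cg_flip2 k l (i : C) x : cg (flip2 k l i) x = cg i x (+) ((x < n) && ((x == k) || (x == l))).
Proof.
case: (ltnP x n) => h.
  by have -> : x = Ordinal h by []; rewrite !cg_ord ffunE.
by rewrite !cg_ge.
Qed.

Lemma sum_eq1 (k m : nat) : \sum_(0 <= x < m) (x == k) = (k < m).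
Proof.
elim: m => [|m IH]; first by rewrite big_geq.
rewrite big_nat_recr // IH; case: (ltngtP k m) => [h|h|->] /=.
- by rewrite ltnS (ltnW h).
- by rewrite ltnS leqNgt h.
- by rewrite ltnSn.
Qed.

Lemma xorb_nat (a b : bool) : (a (+) b) + 2 * (a && b) = a + b.
Proof. by case: a; case: b. Qed.

Lemma odd_sum_xor (a m : nat) (f g : nat -> bool) :
  odd (\sum_(a <= x < m) (f x (+) g x)) = odd (\sum_(a <= x < m) f x) (+) odd (\sum_(a <= x < m) g x).
Proof.
have h : \sum_(a <= x < m) (f x (+) g x) + 2 * \sum_(a <= x < m) (f x && g x)
   = \sum_(a <= x < m) f x + \sum_(a <= x < m) g x.
  rewrite big_distrr -!big_split /=; apply: eq_bigr => x _; exact: xorb_nat.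
by move: (congr1 odd h); rewrite mul2n !oddD odd_double addbF.
Qed.

Lemma par_flip2 k l (i : C) : k != l -> par (flip2 k l i) = par i (+) ((k < n) (+) (l < n)).
Proof.
move=> kl; rewrite /par.
have -> : \sum_(0 <= x < n) cg (flip2 k l i) x = \sum_(0 <= x < n) (cg i x (+) ((x == k) || (x == l))).
  by apply: eq_big_nat => x /andP[_ h]; rewrite cg_flip2 h.
rewrite odd_sum_xor; congr (_ (+) _).
have -> : \sum_(0 <= x < n) ((x == k) || (x == l)) = \sum_(0 <= x < n) ((x == k) + (x == l)).
  apply: eq_bigr => x _; case: (eqVneq x k) => [->|]; last by [].
  by rewrite (negbTE kl).
rewrite big_split !sum_eq1 oddD; by case: (k < n); case: (l < n).
Qed.

Lemma bit_flip2 k l (i : C) x : k != l -> k < n.+1 -> l < n.+1 -> x < n.+1 ->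
  bit (flip2 k l i) x = bit i x (+) ((x == k) || (x == l)).
Proof.
move=> kl hk hl hx; rewrite /bit; case: ifP => h.
  by rewrite cg_flip2 h.
rewrite par_flip2 //; congr (_ (+) _).
have xn : x = n by apply/eqP; rewrite eqn_leq -ltnS hx leqNgt h.
subst x; rewrite !ltnS in hk hl.
case: (ltngtP k n) => [k1|k1|k1]; case: (ltngtP l n) => [l1|l1|l1] //=.
all: first [by move: hl; rewrite leqNgt l1 | by move: hk; rewrite leqNgt k1 | by move: kl; rewrite k1 l1 eqxx].
Qed.


Definition vadd (a b : V) : V := [ffun i => a i + b i].
Definition dl (u : C) : V := [ffun i => nat_of_bool (i == u)].
Definition pr (u v : C) : V := vadd (dl u) (dl v).
Definition wsum (y : V) (f : C -> nat) := \sum_i y i * f i.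
Definition tot (y : V) := wsum y (fun _ => 1).
Definition cs (y : V) (k : nat) := wsum y (fun i => bit i k).
Definition samefib (y z : V) := tot y = tot z /\ forall k, k < n.+1 -> cs y k = cs z k.

Lemma wsum_add a b f : wsum (vadd a b) f = wsum a f + wsum b f.
Proof. by rewrite /wsum -big_split; apply: eq_bigr => i _; rewrite ffunE mulnDl. Qed.

Lemma wsum_dl u f : wsum (dl u) f = f u.
Proof.
rewrite /wsum (bigD1 u) //= big1 ?addn0; first by rewrite ffunE eqxx mul1n.
by move=> i /negbTE h; rewrite ffunE h.
Qed.

Lemma wsum_pr u v f : wsum (pr u v) f = f u + f v.
Proof. by rewrite /pr wsum_add !wsum_dl. Qed.

Lemma samefib_refl y : samefib y y.
Proof. by []. Qed.
Lemma samefib_sym y z : samefib y z -> samefib z y.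
Proof. by case=> h1 h2; split=> // k hk; rewrite h2. Qed.
Lemma samefib_trans y z w : samefib y z -> samefib z w -> samefib y w.
Proof. by case=> h1 h2 [h3 h4]; split=> [|k hk]; [rewrite h1 | rewrite h2 ?h4]. Qed.
Lemma samefib_add r a b : samefib a b -> samefib (vadd r a) (vadd r b).
Proof.
by case=> h1 h2; split=> [|k hk]; rewrite /tot /cs !wsum_add; [rewrite -/(tot a) h1 | rewrite -/(cs a k) h2].
Qed.

Definition step (y z : V) := exists r u v u' v',
  [/\ y = vadd r (pr u v), z = vadd r (pr u' v') & samefib (pr u v) (pr u' v')].

Lemma step_samefib y z : step y z -> samefib y z.
Proof. by case=> r [u [v [u' [v' [-> -> h]]]]]; apply: samefib_add. Qed.

Definition reach := clos_refl_trans V step.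

Lemma reach_samefib y z : reach y z -> samefib y z.
Proof.
elim=> [a b /step_samefib //| a | a b c _ h1 _ h2]; first exact: samefib_refl.
exact: samefib_trans h1 h2.
Qed.

Definition vsub2 (y : V) (u v : C) : V := [ffun x => y x - (x == u) - (x == v)].
Definition mv (y : V) (u v u' v' : C) := vadd (vsub2 y u v) (pr u' v').

Lemma decomp (y : V) (u v : C) : u != v -> 0 < y u -> 0 < y v -> y = vadd (vsub2 y u v) (pr u v).
Proof.
move=> uv hu hv; apply/ffunP => x; rewrite !ffunE.
case: (eqVneq x u) => [->|xu]; first by rewrite (negbTE uv) /= subn0 addn0 subnK.
by case: (eqVneq x v) => [->|xv] /=; rewrite ?subn0 ?addn0 ?add0n ?subnK.
Qed.

Lemma mvE (y : V) (u v u' v' x : C) : mv y u v u' v' x = y x - (x == u) - (x == v) + (x == u') + (x == v').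
Proof. by rewrite !ffunE addnA. Qed.

Lemma swap_fib (u v : C) k l : k != l -> k < n.+1 -> l < n.+1 ->
  bit u k != bit v k -> bit u l != bit v l ->
  samefib (pr u v) (pr (flip2 k l u) (flip2 k l v)).
Proof.
move=> kl hk hl bk bl; split; first by rewrite /tot !wsum_pr.
move=> x hx; rewrite /cs !wsum_pr !bit_flip2 //.
case: (eqVneq x k) => [->|xk] /=; first by move: bk; case: (bit u k); case: (bit v k).
case: (eqVneq x l) => [->|xl] /=; first by move: bl; case: (bit u l); case: (bit v l).
by rewrite !addbF.
Qed.

Lemma move_lem (y : V) (u v : C) k l : u != v -> 0 < y u -> 0 < y v -> k != l -> k < n.+1 -> l < n.+1 ->
  bit u k != bit v k -> bit u l != bit v l ->
  step y (mv y u v (flip2 k l u) (flip2 k l v)) /\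
  (forall f, wsum (mv y u v (flip2 k l u) (flip2 k l v)) f + (f u + f v)
             = wsum y f + (f (flip2 k l u) + f (flip2 k l v))).
Proof.
move=> uv hu hv kl hk hl bk bl; split.
  exists (vsub2 y u v), u, v, (flip2 k l u), (flip2 k l v); split => //.
    exact: decomp.
  exact: swap_fib.
move=> f; rewrite {2}(decomp uv hu hv) /mv !wsum_add !wsum_dl; lia.
Qed.


Definition rep (t : nat) (i : C) : C := [ffun m : 'I_n => (m < t) && i m].
Definition grp t (y : V) (g : C) := wsum y (fun x => rep t x == rep t g).
Definition eb t (y : V) (g : C) := wsum y (fun x => (rep t x == rep t g) && bit x t).

Lemma rep_flip t k l (i : C) : t <= k -> t <= l -> rep t (flip2 k l i) = rep t i.
Proof.
move=> hk hl; apply/ffunP => m; rewrite !ffunE.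
case: (ltnP m t) => //= h.
have -> : (val m == k) = false by apply/negbTE; rewrite neq_ltn (leq_trans h hk).
have -> : (val m == l) = false by apply/negbTE; rewrite neq_ltn (leq_trans h hl).
by rewrite addbF.
Qed.

Lemma rep_n (i : C) : rep n i = i.
Proof. by apply/ffunP => m; rewrite ffunE ltn_ord. Qed.

Lemma rep_rep t (i : C) : rep t (rep t i) = rep t i.
Proof. by apply/ffunP => m; rewrite !ffunE; case: (m < t). Qed.

Lemma rep_succ t (x g : C) : t < n ->
  (rep t.+1 x == rep t.+1 g) = (rep t x == rep t g) && (bit x t == bit g t).
Proof.
move=> tn; have bx : forall z : C, bit z t = z (Ordinal tn) by move=> z; rewrite -bit_ord.
rewrite !bx; apply/eqP/andP.
  move=> h; split.
    apply/eqP/ffunP => m; rewrite !ffunE; case: (ltnP m t) => //= hm.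
    by move: (congr1 (fun f : C => f m) h); rewrite !ffunE ltnS (ltnW hm).
  by move: (congr1 (fun f : C => f (Ordinal tn)) h); rewrite !ffunE /= ltnSn /= => ->.
case=> /eqP h /eqP h2; apply/ffunP => m; rewrite !ffunE ltnS leq_eqVlt.
case: (eqVneq (val m) t) => [e|ne] /=.
  by have -> : m = Ordinal tn by apply: val_inj.
by move: (congr1 (fun f : C => f m) h); rewrite !ffunE.
Qed.

Lemma sum_reps t (y : V) (P : C -> bool) :
  \sum_(g | rep t g == g) wsum y (fun x => (rep t x == rep t g) && P x) = wsum y P.
Proof.
rewrite /wsum exchange_big /=; apply: eq_bigr => x _.
rewrite -big_distrr /=; congr (_ * _).
rewrite (@eq_bigr _ _ _ _ _ _ _ (fun g => ((g == rep t x) && P x : nat))); last first.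
  move=> g /eqP hg; rewrite hg; congr (nat_of_bool (_ && _)).
  by apply/eqP/eqP => [<-|->]; rewrite ?hg ?rep_rep.
rewrite (bigD1 (rep t x)) ?rep_rep //= eqxx big1 ?addn0 //.
by move=> g /andP[_ /negbTE ->].
Qed.

Lemma cg_rep t (x : C) k : cg (rep t x) k = (k < t) && cg x k.
Proof.
case: (ltnP k n) => h.
  by have -> : k = Ordinal h by []; rewrite !cg_ord ffunE.
by rewrite !cg_ge // andbF.
Qed.

Lemma suf_par t (x : C) : t < n ->
  odd (\sum_(t.+1 <= k < n.+1) bit x k) = par (rep t x) (+) bit x t.
Proof.
move=> tn; have := sum_bit_even x.
rewrite (@big_cat_nat _ _ _ t) //= ?(leq_trans (ltnW tn)) //.
rewrite [\sum_(t <= i < n.+1) _]big_ltn ?ltnS ?(ltnW tn) //.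
have -> : \sum_(0 <= k < t) bit x k = \sum_(0 <= k < n) cg (rep t x) k.
  rewrite (@big_cat_nat _ _ _ t 0 n) //= ?(ltnW tn) //.
  rewrite [X in _ = _ + X]big1_seq ?addn0; last first.
    by move=> k /andP[_]; rewrite mem_index_iota => /andP[h _]; rewrite cg_rep ltnNge h.
  apply: eq_big_nat => k /andP[_ h]; rewrite cg_rep h /bit (ltn_trans h tn).
  by [].
rewrite /par !oddD oddb; set a := odd (\sum_(0 <= k < n) _); set b := odd (\sum_(t.+1 <= k < n.+1) _).
by case: a; case: b; case: (bit x t).
Qed.


Lemma wsum_pos (y : V) f : 0 < wsum y f -> exists x, 0 < y x /\ 0 < f x.
Proof.
move=> h; apply: NNPP => hn; move: h; rewrite /wsum big1 // => x _.
apply/eqP; rewrite muln_eq0; apply/negPn/negP => /norP[a b].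
by apply: hn; exists x; rewrite !lt0n.
Qed.

Lemma wsum_split (y : V) (P Q : C -> bool) :
  wsum y (fun x => P x) = wsum y (fun x => P x && Q x) + wsum y (fun x => P x && ~~ Q x).
Proof.
rewrite /wsum -big_split; apply: eq_bigr => x _ /=; rewrite -mulnDr.
by case: (P x); case: (Q x).
Qed.

Lemma wsum_le (y : V) f g : (forall x, f x <= g x) -> wsum y f <= wsum y g.
Proof. by move=> h; apply: leq_sum => x _; rewrite leq_mul2l h orbT. Qed.

Lemma wsum_ext (y : V) f g : (forall x, 0 < y x -> f x = g x) -> wsum y f = wsum y g.
Proof.
move=> h; apply: eq_bigr => x _; case: (posnP (y x)) => [->|hx]; first by rewrite !mul0n.
by rewrite h.
Qed.

Lemma sum_lt (P : pred C) (f g : C -> nat) i0 :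
  (forall i, P i -> f i <= g i) -> P i0 -> f i0 < g i0 ->
  \sum_(i | P i) f i < \sum_(i | P i) g i.
Proof.
move=> h p0 lt0; rewrite (bigD1 i0) //= [X in _ < X](bigD1 i0) //=.
rewrite -addSn leq_add //; apply: leq_sum => i /andP[pi _]; exact: h.
Qed.

Lemma sum_exists_gt (P : pred C) (f g : C -> nat) i0 :
  \sum_(i | P i) f i = \sum_(i | P i) g i -> P i0 -> f i0 < g i0 ->
  exists i1, [/\ P i1 & g i1 < f i1].
Proof.
move=> e p0 lt0; apply: NNPP => hn.
have : \sum_(i | P i) f i < \sum_(i | P i) g i.
  apply: (sum_lt (i0 := i0)) => // i pi; rewrite leqNgt; apply/negP => hi.
  by apply: hn; exists i.
by rewrite e ltnn.
Qed.

Lemma seq_sum_pos (s : seq nat) (F : nat -> nat) :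
  0 < \sum_(i <- s) F i -> exists2 i, i \in s & 0 < F i.
Proof.
move=> h; apply: NNPP => hn; move: h; rewrite big1_seq // => i /andP[_ hi].
by apply/eqP; rewrite -leqn0 leqNgt; apply/negP => hF; apply: hn; exists i.
Qed.

Lemma range_diff (a b : nat) (F : nat -> bool) :
  0 < \sum_(a <= k < b) F k -> exists k, [/\ a <= k, k < b & F k].
Proof.
move=> /seq_sum_pos [k]; rewrite mem_index_iota => /andP[h1 h2] hF.
by exists k; split => //; case: (F k) hF.
Qed.

Lemma range_two (a b : nat) (F : nat -> bool) :
  1 < \sum_(a <= k < b) F k -> exists k l, [/\ k != l, a <= k < b, a <= l < b, F k & F l].
Proof.
move=> h.
have [k [h1 h2 hk]] : exists k, [/\ a <= k, k < b & F k] by apply: range_diff; lia.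
have km : k \in index_iota a b by rewrite mem_index_iota h1 h2.
move: h; rewrite (bigD1_seq k km (iota_uniq _ _)) hk /= => h.
have : 0 < \sum_(i <- index_iota a b | i != k) F i by lia.
rewrite -big_filter => /seq_sum_pos [l]; rewrite mem_filter mem_index_iota => /andP[lk hl] hF.
exists k, l; split => //; first by rewrite eq_sym.
- by rewrite h1 h2.
- by case: (F l) hF.
Qed.


Definition Inv t (y z : V) := forall g, grp t y g = grp t z g.
Definition EE t (y z : V) := \sum_g ((eb t y g - eb t z g) + (eb t z g - eb t y g)).
Definition dsuf t (w u : C) := \sum_(t.+1 <= k < n.+1) (bit w k != bit u k).

Lemma eb_rep t (y : V) g g' : rep t g = rep t g' -> eb t y g = eb t y g'.
Proof. by rewrite /eb => ->. Qed.
Lemma grp_rep t (y : V) g g' : rep t g = rep t g' -> grp t y g = grp t y g'.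
Proof. by rewrite /grp => ->. Qed.
Lemma eb_le_grp t (y : V) g : eb t y g <= grp t y g.
Proof. by apply: wsum_le => x; case: (_ == _); case: (bit x t). Qed.
Lemma grp_split t (y : V) g :
  grp t y g = eb t y g + wsum y (fun x => (rep t x == rep t g) && ~~ bit x t).
Proof. exact: (wsum_split y (fun x => rep t x == rep t g) (fun x => bit x t)). Qed.

Lemma get_u t (y z : V) gp : eb t z gp < eb t y gp ->
  exists u, [/\ 0 < y u, bit u t, rep t u = rep t gp & eb t z u < eb t y u].
Proof.
move=> h; have : 0 < eb t y gp by lia.
case/wsum_pos => u [hu]; rewrite lt0b => /andP[/eqP e bu].
by exists u; split => //; rewrite !(eb_rep _ e).
Qed.

Lemma get_v t (y z : V) gn : Inv t y z -> eb t y gn < eb t z gn ->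
  exists v, [/\ 0 < y v, ~~ bit v t, rep t v = rep t gn & eb t y v < eb t z v].
Proof.
move=> inv h.
have : 0 < wsum y (fun x => (rep t x == rep t gn) && ~~ bit x t).
  have := grp_split t y gn; have := eb_le_grp t z gn; rewrite inv; lia.
case/wsum_pos => v [hv]; rewrite lt0b => /andP[/eqP e bv].
by exists v; split => //; rewrite !(eb_rep _ e).
Qed.

Lemma ar_dec1 (a1 a b : nat) : a1 + 1 = a + 0 -> b < a -> (a1 - b) + (b - a1) < (a - b) + (b - a).
Proof. lia. Qed.
Lemma ar_dec2 (a1 a b : nat) : a1 + 0 = a + 1 -> a < b -> (a1 - b) + (b - a1) < (a - b) + (b - a).
Proof. lia. Qed.

Lemma progress t (y z : V) (u v : C) k : t < n -> samefib y z -> Inv t y z ->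
  0 < y u -> 0 < y v -> bit u t -> ~~ bit v t ->
  eb t z u < eb t y u -> eb t y v < eb t z v ->
  t < k -> k < n.+1 -> bit u k != bit v k ->
  exists y1, [/\ reach y y1, samefib y1 z, Inv t y1 z & EE t y1 z < EE t y z].
Proof.
move=> tn sf inv hu hv but bvt pu nv tk kn bk.
have uv : u != v by apply/eqP => e; move: but bvt; rewrite e => ->.
have tk' : t != k by rewrite neq_ltn tk.
have tn1 : t < n.+1 by apply: ltnW.
have bt : bit u t != bit v t by rewrite but (negbTE bvt).
have [st W] := move_lem uv hu hv tk' tn1 kn bt bk.
set y1 := mv _ _ _ _ _ in st W *.
have bu' : bit (flip2 t k u) t = false by rewrite bit_flip2 // eqxx but.
have bv' : bit (flip2 t k v) t = true by rewrite bit_flip2 // eqxx (negbTE bvt).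
have ru : rep t (flip2 t k u) = rep t u by apply: rep_flip => //; apply: ltnW.
have rv : rep t (flip2 t k v) = rep t v by apply: rep_flip => //; apply: ltnW.
exists y1; split.
- exact: rt_step.
- exact: samefib_trans (samefib_sym (step_samefib st)) sf.
- move=> g; rewrite -inv /grp; move: (W (fun x => rep t x == rep t g)).
  by rewrite ru rv => /addIn.
have key : forall g, eb t y1 g + (rep t u == rep t g) = eb t y g + (rep t v == rep t g).
  move=> g; move: (W (fun x => (rep t x == rep t g) && bit x t)).
  rewrite ru rv bu' bv' but (negbTE bvt) !andbT !andbF !addn0 !add0n /eb => ->.
  by rewrite addnC.
have nuv : rep t u != rep t v.
  apply/eqP => e; move: pu nv; rewrite (eb_rep y e) (eb_rep z e); lia.
rewrite /EE; apply: (@sum_lt xpredT _ _ u) => // [g _|].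
  case hru: (rep t u == rep t g).
    have e := eqP hru; have hrv : (rep t v == rep t g) = false.
      by apply/negbTE; rewrite -e eq_sym.
    move: (key g) pu; rewrite hru hrv (eb_rep y e) (eb_rep z e) /= => k1 p1.
    by apply: ltnW; apply: ar_dec1 k1 p1.
  case hrv: (rep t v == rep t g).
    have e := eqP hrv.
    move: (key g) nv; rewrite hru hrv (eb_rep y e) (eb_rep z e) /= => k1 p1.
    by apply: ltnW; apply: ar_dec2 k1 p1.
  by move: (key g); rewrite hru hrv /= !addn0 => ->.
by move: (key u) pu; rewrite eqxx eq_sym (negbTE nuv) /= => k1 p1; apply: ar_dec1 k1 p1.
Qed.


Lemma neutral t (y z : V) (u w : C) k l : samefib y z -> Inv t y z ->
  0 < y u -> 0 < y w -> u != w -> k != l -> t < k -> t < l -> k < n.+1 -> l < n.+1 ->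
  bit u k != bit w k -> bit u l != bit w l ->
  let y2 := mv y u w (flip2 k l u) (flip2 k l w) in
  [/\ reach y y2, samefib y2 z, Inv t y2 z, (forall g, eb t y2 g = eb t y g) &
      (0 < y2 (flip2 k l u) /\ (forall x, x != u -> x != w -> y x <= y2 x))].
Proof.
move=> sf inv hu hw uw kl tk tl kn ln bk bl y2.
have [st W] := move_lem uw hu hw kl kn ln bk bl.
have tn1 : t < n.+1 by apply: ltn_trans tk kn.
have tkl : ((t == k) || (t == l)) = false by rewrite (ltn_eqF tk) (ltn_eqF tl).
have bu' : bit (flip2 k l u) t = bit u t by rewrite bit_flip2 // tkl addbF.
have bw' : bit (flip2 k l w) t = bit w t by rewrite bit_flip2 // tkl addbF.
have ru : rep t (flip2 k l u) = rep t u by apply: rep_flip; apply: ltnW.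
have rw : rep t (flip2 k l w) = rep t w by apply: rep_flip; apply: ltnW.
split.
- exact: rt_step.
- exact: samefib_trans (samefib_sym (step_samefib st)) sf.
- move=> g; rewrite -inv /grp; move: (W (fun x => rep t x == rep t g)).
  by rewrite ru rw => /addIn.
- move=> g; rewrite /eb; move: (W (fun x => (rep t x == rep t g) && bit x t)).
  by rewrite ru rw bu' bw' => /addIn.
split; first by rewrite /y2 mvE eqxx /= addn1 ltnS leq_addr.
move=> x xu xw; rewrite /y2 mvE (negbTE xu) (negbTE xw) /= !subn0 -addnA; exact: leq_addr.
Qed.

Lemma neq_addb (a b : bool) : (a != b) = a (+) b.
Proof. by case: a; case: b. Qed.

Lemma dsuf_odd t (w u : C) : t < n ->
  odd (dsuf t w u) = (par (rep t w) (+) bit w t) (+) (par (rep t u) (+) bit u t).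
Proof.
move=> tn; rewrite /dsuf.
have -> : \sum_(t.+1 <= k < n.+1) (bit w k != bit u k) = \sum_(t.+1 <= k < n.+1) (bit w k (+) bit u k).
  by apply: eq_bigr => k _; rewrite neq_addb.
by rewrite odd_sum_xor !suf_par.
Qed.

Lemma wsum_dsuf t (y : V) u :
  wsum y (fun w => dsuf t w u) = \sum_(t.+1 <= k < n.+1) wsum y (fun w => bit w k != bit u k).
Proof.
rewrite /wsum /dsuf; under eq_bigr do rewrite big_distrr; exact: exchange_big.
Qed.

Lemma wsum_neq (y z : V) k c : samefib y z -> k < n.+1 ->
  wsum y (fun w => bit w k != c) = wsum z (fun w => bit w k != c).
Proof.
case=> ht hc hk.
have split0 : forall y0 : V, tot y0 = cs y0 k + wsum y0 (fun x => ~~ bit x k).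
  by move=> y0; exact: (wsum_split y0 (fun _ => true) (fun x => bit x k)).
case: c.
  have e : forall y0 : V, wsum y0 (fun w => bit w k != true) = wsum y0 (fun x => ~~ bit x k).
    by move=> y0; apply: eq_bigr => x _; case: (bit x k).
  rewrite !e; have := split0 y; have := split0 z; rewrite ht (hc k hk); lia.
have e : forall y0 : V, wsum y0 (fun w => bit w k != false) = cs y0 k.
  by move=> y0; apply: eq_bigr => x _; case: (bit x k).
by rewrite !e hc.
Qed.

Lemma no_stuck t (y z : V) (u gn : C) : t < n -> samefib y z -> Inv t y z ->
  0 < y u -> bit u t -> eb t z u < eb t y u -> eb t y gn < eb t z gn ->
  (forall g1 g2, eb t z g1 < eb t y g1 -> eb t y g2 < eb t z g2 -> par (rep t g1) != par (rep t g2)) ->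
  (forall w, 0 < y w -> dsuf t w u <= 1) -> False.
Proof.
move=> tn sf inv hu but pu nn hb hd.
set cu := par (rep t u) (+) true.
pose hf w : bool := odd (dsuf t w u).
have E1 : wsum y (fun w => hf w) = wsum y (fun w => dsuf t w u).
  apply: wsum_ext => w hw; have := hd w hw; rewrite /hf.
  by case: (dsuf t w u) => [|[|]].
have E2 : wsum y (fun w => dsuf t w u) = wsum z (fun w => dsuf t w u).
  rewrite !wsum_dsuf; apply: eq_big_nat => k /andP[_ h2]; exact: wsum_neq.
have E3 : wsum z (fun w => hf w) <= wsum z (fun w => dsuf t w u).
  by apply: wsum_le => w; rewrite /hf; case: (dsuf t w u) => [|d] //=; case: (odd _).
have hfE : forall w, hf w = par (rep t w) (+) bit w t (+) cu by move=> w; rewrite /hf dsuf_odd // but.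
pose H (y0 : V) g := if par (rep t g) (+) cu then grp t y0 g - eb t y0 g else eb t y0 g.
have HE : forall y0 : V, wsum y0 (fun w => hf w) = \sum_(g | rep t g == g) H y0 g.
  move=> y0; rewrite -(sum_reps t y0 hf); apply: eq_bigr => g _.
  have -> : wsum y0 (fun x => (rep t x == rep t g) && hf x)
          = wsum y0 (fun x => (rep t x == rep t g) && ((par (rep t g) (+) cu) (+) bit x t)).
    apply: eq_bigr => x _; case e: (rep t x == rep t g) => //=.
    by rewrite hfE (eqP e) addbAC.
  rewrite /H; case: (par (rep t g) (+) cu).
    rewrite grp_split addKn; apply: eq_bigr => x _; by rewrite addTb.
  by apply: eq_bigr => x _; rewrite addFb.
have Hlt : \sum_(g | rep t g == g) H y g < \sum_(g | rep t g == g) H z g.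
  apply: (@sum_lt (fun g => rep t g == g) _ _ (rep t u)).
  - move=> g _; rewrite /H; case s: (par (rep t g) (+) cu).
      have : eb t z g <= eb t y g.
        rewrite leqNgt; apply/negP => ng; move: (hb u g pu ng) s; rewrite /cu.
        by case: (par (rep t g)); case: (par (rep t u)).
      have := eb_le_grp t y g; have := eb_le_grp t z g; rewrite (inv g); lia.
    rewrite leqNgt; apply/negP => pg; move: (hb g gn pg nn) (hb u gn pu nn) s; rewrite /cu.
    by case: (par (rep t g)); case: (par (rep t u)); case: (par (rep t gn)).
  - by rewrite rep_rep.
  rewrite /H rep_rep /cu.
  have -> : par (rep t u) (+) (par (rep t u) (+) true) = true by case: (par _).
  rewrite !(grp_rep _ (rep_rep t u)) !(eb_rep _ (rep_rep t u)).
  have := eb_le_grp t y u; have := eb_le_grp t z u; rewrite (inv u); lia.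
move: Hlt; rewrite -!HE; move: E1 E2 E3; clear; lia.
Qed.


Lemma exists_diff (a b : nat) (f g : nat -> bool) :
  odd (\sum_(a <= k < b) f k) != odd (\sum_(a <= k < b) g k) ->
  exists k, [/\ a <= k, k < b & f k != g k].
Proof.
move=> h0; have h : odd (\sum_(a <= k < b) (f k (+) g k)) by rewrite odd_sum_xor -neq_addb.
have : 0 < \sum_(a <= k < b) (f k (+) g k) by move: h; case: (\sum_(a <= k < b) _).
case/range_diff => k [h1 h2 h3]; exists k; split => //; by rewrite neq_addb.
Qed.

Lemma descent t (y z : V) : t < n -> samefib y z -> Inv t y z -> 0 < EE t y z ->
  exists y1, [/\ reach y y1, samefib y1 z, Inv t y1 z & EE t y1 z < EE t y z].
Proof.
move=> tn sf inv hE.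
have tn1 : t < n.+1 by apply: ltnW.
have [g0 hg0] : exists g0, eb t y g0 != eb t z g0.
  apply: NNPP => hn; move: hE; rewrite /EE big1 // => g _.
  have e : eb t y g = eb t z g by apply: NNPP => hh; apply: hn; exists g; apply/eqP.
  by rewrite e subnn.
have sumE : \sum_(g | rep t g == g) eb t y g = \sum_(g | rep t g == g) eb t z g.
  by rewrite /eb !(sum_reps t _ (fun x => bit x t)); case: sf => _ h; apply: h.
have r0 : rep t (rep t g0) == rep t g0 by rewrite rep_rep.
have e0 : forall y0, eb t y0 (rep t g0) = eb t y0 g0 by move=> y0; apply: eb_rep; rewrite rep_rep.
have [gp [gn [pg ng]]] : exists gp gn, eb t z gp < eb t y gp /\ eb t y gn < eb t z gn.
  case: (ltngtP (eb t y g0) (eb t z g0)) hg0 => // h _.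
    have hl : eb t y (rep t g0) < eb t z (rep t g0) by rewrite !e0.
    have [gp [_ hp]] := sum_exists_gt sumE r0 hl.
    by exists gp, g0.
  have hl : eb t z (rep t g0) < eb t y (rep t g0) by rewrite !e0.
  have [gn [_ hn]] := sum_exists_gt (esym sumE) r0 hl.
  by exists g0, gn.
case: (classic (exists g1 g2, [/\ eb t z g1 < eb t y g1, eb t y g2 < eb t z g2 & par (rep t g1) = par (rep t g2)])).
  case=> g1 [g2 [p1 n2 pe]].
  have [u [hu bu ru pu]] := get_u p1.
  have [v [hv bv rv nv]] := get_v inv n2.
  have [k [k1 k2 bk]] : exists k, [/\ t.+1 <= k, k < n.+1 & bit u k != bit v k].
    apply: exists_diff; rewrite !suf_par // ru rv pe bu (negbTE bv).
    by case: (par _).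
  exact: (progress tn sf inv hu hv bu bv pu nv k1 k2 bk).
move=> hnot.
have hb : forall g1 g2, eb t z g1 < eb t y g1 -> eb t y g2 < eb t z g2 -> par (rep t g1) != par (rep t g2).
  by move=> g1 g2 h1 h2; apply/eqP => e; apply: hnot; exists g1, g2.
have [u [hu bu ru pu]] := get_u pg.
have [v [hv bv rv nv]] := get_v inv ng.
case: (classic (exists k, [/\ t < k, k < n.+1 & bit u k != bit v k])).
  case=> k [k1 k2 bk]; exact: (progress tn sf inv hu hv bu bv pu nv k1 k2 bk).
move=> nok.
have agree : forall k, t < k -> k < n.+1 -> bit u k = bit v k.
  by move=> k h1 h2; apply: NNPP => hh; apply: nok; exists k; split => //; apply/eqP.
case: (classic (exists w, 0 < y w /\ 1 < dsuf t w u)); last first.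
  move=> hn; exfalso; apply: (no_stuck tn sf inv hu bu pu ng hb) => w hw.
  by rewrite leqNgt; apply/negP => h; apply: hn; exists w.
case=> w [hw hdw].
have [k [l [kl /andP[k1 k2] /andP[l1 l2] bk bl]]] := range_two hdw.
have uw : u != w by apply/eqP => e; move: bk; rewrite e eqxx.
have bk' : bit u k != bit w k by rewrite eq_sym.
have bl' : bit u l != bit w l by rewrite eq_sym.
have [r2 sf2 inv2 eb2 [hu2 hge]] := neutral sf inv hu hw uw kl k1 l1 k2 l2 bk' bl'.
set y2 := mv _ _ _ _ _ in r2 sf2 inv2 eb2 hu2 hge.
have vu : v != u by apply/eqP => e; move: bu bv; rewrite e => ->.
have vw : v != w.
  apply/eqP => e; move: bk; rewrite (agree k k1 k2) e eqxx; by [].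
have hv2 : 0 < y2 v by apply: leq_trans hv (hge v vu vw).
have tn' : t != k by rewrite neq_ltn k1.
have tl' : t != l by rewrite neq_ltn l1.
have ru2 : rep t (flip2 k l u) = rep t u by apply: rep_flip; apply: ltnW.
have bu2 : bit (flip2 k l u) t by rewrite bit_flip2 // ?(negbTE tn') ?(negbTE tl') ?addbF //; apply: ltnW.
have pu2 : eb t z (flip2 k l u) < eb t y2 (flip2 k l u) by rewrite eb2 !(eb_rep _ ru2).
have nv2 : eb t y2 v < eb t z v by rewrite eb2.
have bk2 : bit (flip2 k l u) k != bit v k.
  by rewrite bit_flip2 // eqxx -(agree k k1 k2); case: (bit u k).
have [y1 [r1 sf1 inv1 lt1]] := progress tn sf2 inv2 hu2 hv2 bu2 bv pu2 nv2 k1 k2 bk2.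
exists y1; split => //; first exact: rt_trans r2 r1.
have -> : EE t y z = EE t y2 z by rewrite /EE; apply: eq_bigr => g _; rewrite eb2.
exact: lt1.
Qed.


Lemma wsum_ind (y : V) g : wsum y (fun x => x == g) = y g.
Proof.
rewrite /wsum (bigD1 g) //= eqxx muln1 big1 ?addn0 // => x /negbTE ->.
by rewrite muln0.
Qed.

Lemma inv_n (y z : V) : Inv n y z -> y = z.
Proof.
move=> h; apply/ffunP => g; move: (h g); rewrite /grp.
have e : forall y0 : V, wsum y0 (fun x => rep n x == rep n g) = wsum y0 (fun x => x == g).
  by move=> y0; apply: eq_bigr => x _; rewrite !rep_n.
by rewrite !e !wsum_ind.
Qed.

Lemma inv_0 (y z : V) : samefib y z -> Inv 0 y z.
Proof.
case=> ht _ g; rewrite /grp.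
have e : forall y0 : V, wsum y0 (fun x => rep 0 x == rep 0 g) = tot y0.
  move=> y0; apply: eq_bigr => x _.
  have -> : rep 0 x = rep 0 g by apply/ffunP => m; rewrite !ffunE.
  by rewrite eqxx.
by rewrite !e.
Qed.

Lemma inv_succ t (y z : V) : t < n -> Inv t y z -> EE t y z = 0 -> Inv t.+1 y z.
Proof.
move=> tn inv hE g.
have ebe : forall g', eb t y g' = eb t z g'.
  move=> g'; move: hE; rewrite /EE (bigD1 g') //=; lia.
have e : forall y0 : V, grp t.+1 y0 g =
    if bit g t then eb t y0 g else wsum y0 (fun x => (rep t x == rep t g) && ~~ bit x t).
  move=> y0; rewrite /grp /eb; case hb: (bit g t); apply: eq_bigr => x _; rewrite rep_succ // hb.
    by case: (bit x t); rewrite ?andbT ?andbF.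
  by case: (bit x t); rewrite ?andbT ?andbF.
rewrite !e; case: (bit g t); first exact: ebe.
have := grp_split t y g; have := grp_split t z g; rewrite (inv g) (ebe g); lia.
Qed.

Lemma conn_aux d : forall t, t + d = n -> forall y z, samefib y z -> Inv t y z -> reach y z.
Proof.
elim: d => [|d IH] t htd y z sf inv.
  rewrite addn0 in htd; subst t; rewrite (inv_n inv); exact: rt_refl.
have tn : t < n by lia.
move: {2}(EE t y z) (leqnn (EE t y z)) => e; elim: e y sf inv => [|e IHe] y sf inv hE.
  have hE0 : EE t y z = 0 by lia.
  apply: (IH t.+1) => //; first lia.
  exact: inv_succ.
case: (posnP (EE t y z)) => h0.
  apply: (IH t.+1) => //; first lia.
  exact: inv_succ.
have [y1 [r1 sf1 inv1 lt1]] := descent tn sf inv h0.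
apply: rt_trans r1 _; apply: IHe => //; lia.
Qed.

Theorem conn (y z : V) : samefib y z -> reach y z.
Proof. move=> sf; apply: (@conn_aux n 0) => //; exact: inv_0. Qed.


Local Open Scope ring_scope.

Lemma Posz_sum (f : C -> nat) : (\sum_i f i)%N%:Z = \sum_i (f i)%:Z.
Proof. by rewrite (big_morph Posz PoszD (erefl _)). Qed.

Lemma sign_bool (b : bool) : (-1) ^+ (nat_of_bool b) = (if b then -1 else 1 : int).
Proof. by case: b. Qed.

Lemma Mentry0 (i : C) (j : 'I_n.+2) : (j : nat) = 0%N -> Mentry i j = 1.
Proof. by move=> h; rewrite /Mentry h. Qed.

Lemma MentryS (i : C) (j : 'I_n.+2) k : (j : nat) = k.+1 -> Mentry i j = (if bit i k then -1 else 1).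
Proof.
move=> h; rewrite /Mentry h /=.
have kn : (k < n.+1)%N by move: (ltn_ord j); rewrite h.
case: (eqVneq k n) => [e|ne].
  subst k; rewrite eqxx bit_n /par -sum_ord_cg -signr_odd; exact: sign_bool.
have kn' : (k < n)%N by rewrite ltn_neqAle ne -ltnS.
have -> : (k.+1 == n.+1) = false by apply/negbTE; rewrite eqSS.
rewrite (@big_pred1 _ _ _ _ (Ordinal kn')) /=; last by move=> m; rewrite /= eqSS.
by rewrite -bit_ord sign_bool.
Qed.

Lemma MtE0 (y : V) (j : 'I_n.+2) : (j : nat) = 0%N -> Mt (toZ y) j = (tot y)%:Z.
Proof.
move=> h; rewrite /Mt /tot /wsum Posz_sum; apply: eq_bigr => i _.
by rewrite Mentry0 // ffunE mul1r muln1.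
Qed.

Lemma MtES (y : V) (j : 'I_n.+2) k : (j : nat) = k.+1 ->
  Mt (toZ y) j = (tot y)%:Z - 2 * (cs y k)%:Z.
Proof.
move=> h; rewrite /Mt /tot /cs /wsum !Posz_sum mulr_sumr -sumrB; apply: eq_bigr => i _.
rewrite (MentryS _ h) ffunE muln1 PoszM; case: (bit i k) => /=.
  by rewrite mulr1 mulN1r; lia.
by rewrite mul1r mulr0 subr0.
Qed.

Lemma fiber_iff (y z : V) : inFiber y z <-> samefib y z.
Proof.
split.
  move=> h; split.
    by move: (h (@Ordinal n.+2 0 isT)); rewrite !MtE0 // => [[]].
  move=> k hk; move: (h (@Ordinal n.+2 k.+1 hk)); rewrite !(@MtES _ _ k) //.
  move: (@MtE0 y (@Ordinal n.+2 0 isT) erefl) (@MtE0 z (@Ordinal n.+2 0 isT) erefl).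
  rewrite -!(h (@Ordinal n.+2 0 isT)) => -> [ht].
  rewrite ht => e; have : (cs z k)%:Z = (cs y k)%:Z :> int by lia.
  by case.
case=> ht hc j; case: (posnP (j : nat)) => [h|h].
  by rewrite !MtE0 // ht.
have hj : (j : nat) = (j.-1).+1 by rewrite prednK.
rewrite !(MtES _ hj) ht hc //.
by rewrite -ltnS -hj.
Qed.


Lemma Mt_sub (z1 z2 : zvec n.+1) j : Mt (z1 - z2) j = Mt z1 j - Mt z2 j.
Proof. by rewrite /Mt -sumrB; apply: eq_bigr => i _; rewrite !ffunE mulrBr. Qed.

Lemma Mt_add (a b : V) j : Mt (toZ (vadd a b)) j = Mt (toZ a) j + Mt (toZ b) j.
Proof. by rewrite /Mt -big_split; apply: eq_bigr => i _; rewrite !ffunE PoszD mulrDr. Qed.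

Lemma toZ_vadd (r a b : V) : toZ (vadd r b) - toZ (vadd r a) = toZ b - toZ a.
Proof. by apply/ffunP => i; rewrite !ffunE PoszD; lia. Qed.

Lemma toZ_inj (a b : V) : toZ a = toZ b -> a = b.
Proof. by move=> h; apply/ffunP => i; move: (congr1 (fun f : zvec n.+1 => f i) h); rewrite !ffunE => [[]]. Qed.

Lemma fib_trans (b x y : V) : inFiber b x -> inFiber b y -> inFiber x y.
Proof. by move=> h1 h2 j; rewrite h1 h2. Qed.

Local Close Scope ring_scope.

Lemma tot_sum (y : V) : tot y = \sum_i y i.
Proof. by apply: eq_bigr => i _; rewrite muln1. Qed.

Lemma pr_sym u v : pr u v = pr v u.
Proof. by apply/ffunP => i; rewrite !ffunE addnC. Qed.

Lemma pr_at u v i : pr u v i = (i == u) + (i == v).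
Proof. by rewrite !ffunE. Qed.

Lemma deg1 (y : V) : \sum_i y i = 1 -> exists a, y = dl a.
Proof.
move=> h.
have [a ha] : exists a : C, 0 < y a.
  apply: NNPP => hn; move: h; rewrite big1 // => i _; apply/eqP; rewrite -leqn0 leqNgt.
  by apply/negP => hi; apply: hn; exists i.
exists a; move: h; rewrite (bigD1 a) //= => h.
have ar : forall x s : nat, 0 < x -> x + s = 1 -> s = 0 by move=> x s; lia.
move: (ar _ _ ha h) => rest.
apply/ffunP => i; rewrite ffunE; case: (eqVneq i a) => [->|ia] /=; first by move: h; rewrite rest addn0.
by move/eqP: rest; rewrite sum_nat_eq0 => /forallP /(_ i); rewrite ia /= => /eqP.
Qed.

Lemma deg2_ex (y : V) : \sum_i y i = 2 -> exists u v, y = pr u v.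
Proof.
move=> h.
have [a ha] : exists a : C, 0 < y a.
  apply: NNPP => hn; move: h; rewrite big1 // => i _; apply/eqP; rewrite -leqn0 leqNgt.
  by apply/negP => hi; apply: hn; exists i.
pose y1 : V := [ffun x => y x - (x == a)].
have hs : \sum_i y1 i = 1.
  have e1 : \sum_i y i = y a + \sum_(i | i != a) y i by rewrite (bigD1 a).
  have e2 : \sum_i y1 i = y1 a + \sum_(i | i != a) y1 i by rewrite (bigD1 a).
  have e3 : \sum_(i | i != a) y1 i = \sum_(i | i != a) y i.
    by apply: eq_bigr => i /negbTE hi; rewrite ffunE hi subn0.
  have e4 : y1 a = y a - 1 by rewrite ffunE eqxx.
  have ar : forall x s : nat, 0 < x -> x + s = 2 -> x - 1 + s = 1 by move=> x s; lia.
  by rewrite e2 e3 e4; apply: ar => //; rewrite -e1.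
have [v hv] := deg1 hs; exists a, v; apply/ffunP => x.
move: (congr1 (fun f : V => f x) hv); rewrite !ffunE => <-.
case: (eqVneq x a) => [->|xa] /=; last by rewrite subn0.
by rewrite addnC subnK.
Qed.

Lemma pr_pos u v i : 0 < pr u v i -> pr u v = pr i (if i == u then v else u).
Proof.
rewrite pr_at; case: (eqVneq i u) => [->|iu] //=.
case: (eqVneq i v) => [->|//]; by rewrite pr_sym.
Qed.

Lemma pr_cancel i v v' : samefib (pr i v) (pr i v') -> v = v'.
Proof.
case=> _ h; apply: cell_eq => k hk; move: (h k (ltnW hk)); rewrite /cs !wsum_pr => /addnI.
by case: (bit v k); case: (bit v' k).
Qed.

Lemma disj (a a' : V) : \sum_i a i = 2 -> \sum_i a' i = 2 -> samefib a a' -> a != a' ->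
  forall i, a i = 0 \/ a' i = 0.
Proof.
move=> h1 h2 sf ne i; case: (posnP (a i)) => [->|p1]; first by left.
case: (posnP (a' i)) => [->|p2]; first by right.
exfalso; move: ne; have [u [v e1]] := deg2_ex h1; have [u' [v' e2]] := deg2_ex h2.
rewrite e1 e2 in sf p1 p2 *; rewrite (pr_pos p1) (pr_pos p2) in sf *.
by rewrite (pr_cancel sf) eqxx.
Qed.

Definition posn (z : int) : nat := if z is Posz k then k else 0.
Definition posv (w : zvec n.+1) : V := [ffun i => posn (w i)].

Lemma posv_diff (a a' : V) : (forall i, a i = 0 \/ a' i = 0) -> posv (toZ a' - toZ a)%R = a'.
Proof.
move=> h; apply/ffunP => i; rewrite !ffunE.
case: (h i) => ->; first by rewrite GRing.subr0.
by rewrite GRing.sub0r; case: (a i).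
Qed.


Section Main.
Local Open Scope ring_scope.
Local Open Scope fset_scope.
Variable Bsel : V -> {fset zvec n.+1}.
Hypothesis Hfib : forall b b', deg2 b -> inFiber b b' -> Bsel b = Bsel b'.
Hypothesis Hsel : forall b, deg2 b -> nontrivial_fiber b ->
     [/\ forall S : {fset V}, fiber_set b S -> #|` Bsel b| = (#|` S| - 1)%N,
         forall z, z \in Bsel b ->
           exists x y, [/\ inFiber b x, inFiber b y & z = toZ x - toZ y]
       & gconnected (Bsel b) b].
Variable B : {fset zvec n.+1}.
Hypothesis HB : forall z, z \in B <->
          exists b, [/\ deg2 b, nontrivial_fiber b & z \in Bsel b].

Lemma fib_deg2 (b y : V) : deg2 b -> inFiber b y -> deg2 y.
Proof. by rewrite /deg2 => hb /fiber_iff [ht _]; rewrite -tot_sum -ht tot_sum. Qed.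

Lemma B_move z : z \in B -> is_move z.
Proof.
case/HB => b [db nb zb]; have [_ hd _] := Hsel db nb.
have [x [y [hx hy ->]]] := hd z zb.
by move=> j; rewrite Mt_sub hx hy subrr.
Qed.

Lemma lift_step (b y y' : V) : step y y' -> inFiber b y -> clos_refl_trans V (gedge B b) y y'.
Proof.
case=> r [u [v [u' [v' [ey ey' sf]]]]] hb.
case: (eqVneq (pr u v) (pr u' v')) => [e|ne].
  by rewrite ey ey' e; apply: rt_refl.
have dc : deg2 (pr u v) by rewrite /deg2 -tot_sum /tot wsum_pr.
have nc : nontrivial_fiber (pr u v).
  by exists (pr u' v'); split; [apply/fiber_iff | apply/eqP; rewrite eq_sym].
have [_ _ gc] := Hsel dc nc.
have := gc (pr u v) (pr u' v') (fun j => erefl) (proj2 (fiber_iff _ _) sf).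
rewrite ey ey'; elim=> [x1 x2 [h1 h2 hm]| x1 | x1 x2 x3 _ c1 _ c2].
- apply: rt_step; split.
  + by move=> j; rewrite Mt_add h1 -Mt_add -ey hb.
  + by move=> j; rewrite Mt_add h2 -Mt_add -ey hb.
  + rewrite !toZ_vadd; case: hm => h; [left|right]; apply: (proj2 (HB _)); by exists (pr u v).
- exact: rt_refl.
- exact: rt_trans c1 c2.
Qed.

Lemma lift_reach (b y y' : V) : reach y y' -> inFiber b y -> clos_refl_trans V (gedge B b) y y'.
Proof.
move=> r; elim: r => [x1 x2 st|x1|x1 x2 x3 r1 IH1 r2 IH2] hb.
- exact: lift_step st hb.
- exact: rt_refl.
- apply: rt_trans (IH1 hb) (IH2 _).
  have [ht hc] := reach_samefib r1.
  apply/fiber_iff; apply: samefib_trans (proj1 (fiber_iff _ _) hb) _; by split.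
Qed.

Lemma markov : markov_basis B.
Proof.
split; first exact: B_move.
move=> b; rewrite /gconnected => x y hx hy; apply: (lift_reach _ hx); apply: conn.
apply: samefib_trans (samefib_sym (proj1 (fiber_iff _ _) hx)) (proj1 (fiber_iff _ _) hy).
Qed.


Lemma fiber_set_ex (b : V) : deg2 b -> exists S : {fset V}, fiber_set b S.
Proof.
move=> db.
exists (seq_fset tt [seq x <- allpairs pr (enum C) (enum C) | [forall j, Mt (toZ x) j == Mt (toZ b) j]]).
move=> y; rewrite seq_fsetE mem_filter; split.
  by case/andP => /forallP h _ j; apply/eqP.
move=> hy; apply/andP; split; first by apply/forallP => j; apply/eqP.
have [u [v ->]] := deg2_ex (fib_deg2 db hy).
by apply: allpairs_f; rewrite mem_enum.
Qed.

Lemma disj_fib (b x y : V) : deg2 b -> inFiber b x -> inFiber b y -> x != y ->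
  forall i, x i = 0%N \/ y i = 0%N.
Proof.
move=> db hx hy ne; apply: disj => //; try exact: (fib_deg2 db).
apply: samefib_trans (samefib_sym (proj1 (fiber_iff _ _) hx)) (proj1 (fiber_iff _ _) hy).
Qed.

Lemma edge_in (b0 : V) z (B' : {fset zvec n.+1}) (a a' : V) : deg2 b0 -> B' `<=` B -> z \notin B' ->
  inFiber b0 a -> inFiber b0 a' -> a != a' -> toZ a' - toZ a \in B' ->
  [/\ posv (toZ a' - toZ a) = a', posv (toZ a - toZ a') = a & toZ a' - toZ a \in Bsel b0 `\ z].
Proof.
move=> db sub zn ha ha' ne hw.
have dj := disj_fib db ha ha' ne.
have p1 : posv (toZ a' - toZ a) = a' by apply: posv_diff.
have p2 : posv (toZ a - toZ a') = a.
  apply: posv_diff => i; case: (dj i); by [right | left].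
split => //.
have wB : toZ a' - toZ a \in B by apply: (fsubsetP sub).
have [b1 [d1 n1 w1]] := proj1 (HB _) wB.
have [_ hd _] := Hsel d1 n1.
have [x1 [y1 [hx1 hy1 e1]]] := hd _ w1.
have nxy : x1 != y1.
  apply/eqP => e; move: e1; rewrite e subrr => /eqP; rewrite subr_eq0 => /eqP /toZ_inj e'.
  by move: ne; rewrite e' eqxx.
have dj1 := disj_fib d1 hx1 hy1 nxy.
have dj1' : forall i, y1 i = 0%N \/ x1 i = 0%N by move=> i; case: (dj1 i); [right | left].
have ex : x1 = a' by rewrite -(posv_diff dj1') -e1 p1.
have fb : inFiber b1 b0 by move=> j; rewrite -ha' -ex hx1.
rewrite in_fsetD1 -(Hfib d1 fb) w1 andbT.
by apply/eqP => e; move: zn; rewrite -e hw.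
Qed.

Lemma minimal (B' : {fset zvec n.+1}) : B' `<` B -> ~ markov_basis B'.
Proof.
move=> prop [_ mb].
move: prop; rewrite fproperE => /andP[sub nsub].
have [z zB zn] : exists2 z, z \in B & z \notin B'.
  apply: NNPP => hn; move/negP: nsub; apply; apply/fsubsetP => x hx.
  by apply: NNPP => hx'; apply: hn; exists x => //; apply/negP.
have [b0 [d0 n0 z0]] := proj1 (HB _) zB.
have [hcard _ _] := Hsel d0 n0.
have [S hS] := fiber_set_ex d0.
have cS := hcard S hS.
pose es := [seq (posv w, posv (- w)) | w <- enum_fset (Bsel b0 `\ z)].
have key : forall a a', gedge B' b0 a a' -> a = a' \/ adj es a a'.
  move=> a a' [ha ha' hm]; case: (eqVneq a a') => [e|ne]; [by left | right].
  case: hm => hm.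
    have [p1 p2 hin] := edge_in d0 sub zn ha ha' ne hm.
    exists (a', a); last by rewrite /= !eqxx orbT.
    have -> : (a', a) = (posv (toZ a' - toZ a), posv (- (toZ a' - toZ a))) by rewrite opprB p1 p2.
    exact: map_f.
  have ne' : a' != a by rewrite eq_sym.
  have [p1 p2 hin] := edge_in d0 sub zn ha' ha ne' hm.
  exists (a, a'); last by rewrite /= !eqxx.
  have -> : (a, a') = (posv (toZ a - toZ a'), posv (- (toZ a - toZ a'))) by rewrite opprB p1 p2.
  exact: map_f.
have hc : (#|` S| <= #|` [fset b0]| + size es)%N.
  apply: reach_card => x /hS hx; exists b0; first by rewrite in_fset1.
  have := mb b0 b0 x (fun j => erefl) hx.
  elim=> [x1 x2 /key [->|h]|x1|x1 x2 x3 _ c1 _ c2].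
  - exact: rt_refl.
  - exact: rt_step.
  - exact: rt_refl.
  - exact: rt_trans c1 c2.
have b0S : b0 \in S by apply/hS => j.
move: hc; rewrite cardfs1 size_map.
have := cardfsD1 z (Bsel b0); rewrite z0 cS.
have : (0 < #|` S|)%N by rewrite (cardfsD1 b0) b0S.
have ar : forall s c : nat, (0 < s)%N -> (s - 1)%N = (1 + c)%N -> (s <= 1 + c)%N -> False by move=> s c; lia.
move=> h1 /= h2 h3; exact: ar h1 h2 h3.
Qed.

End Main.

End Core.

Unset Implicit Arguments.
Import GRing.Theory Num.Theory.
Local Open Scope ring_scope.
Local Open Scope fset_scope.

(* Bsel b is the chosen set B_F for the fiber F = F(M' b); it is required to
   depend only on the fiber (first hypothesis), so it is a choice per fiber. *)
Theorem corollary1 (p : nat) (hp : (2 <= p)%N)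
  (Bsel : nvec p -> {fset zvec p})
  (Hfib : forall b b', deg2 b -> inFiber b b' -> Bsel b = Bsel b')
  (Hsel : forall b, deg2 b -> nontrivial_fiber b ->
     [/\ forall S : {fset nvec p}, fiber_set b S -> #|` Bsel b| = (#|` S| - 1)%N,
         forall z, z \in Bsel b ->
           exists x y, [/\ inFiber b x, inFiber b y & z = toZ x - toZ y]
       & gconnected (Bsel b) b])
  (B : {fset zvec p})
  (HB : forall z, z \in B <->
          exists b, [/\ deg2 b, nontrivial_fiber b & z \in Bsel b]) :
  minimal_markov_basis B.
Proof.
case: p hp Bsel Hfib Hsel B HB => [//|n] hp Bsel Hfib Hsel B HB.
split; first exact: (markov Hsel HB).
move=> B'; exact: (minimal Hfib Hsel HB).
Qed.
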